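(* Let $X$ be a random variable taking values in a metric space $(\mathcal{X}, d)$ and $Y \in [0,1]$ a target outcome. Let $L > 0$, $\alpha \ge 0$, and let $\mathcal{F}^{\text{Lip}(L,d)}$ be the set of functions $f : \mathcal{X} \to [0,1]$ satisfying $|f(x) - f(x')| \le L\, d(x, x')$ for all $x, x' \in \mathcal{X}$. Let $\{S_k\}_{k \in K}$, $K \subseteq \mathbb{N}$, be a partition of $\mathcal{X}$ in which each $S_k$ has diameter at most $4\alpha / L$ with respect to $d$ (and $\mathbb{P}(X \in S_k) > 0$). Then $\{S_k\}_{k \in K}$ is an $\alpha$-multicalibrated partition with respect to $\mathcal{F}^{\text{Lip}(L,d)}$ and $Y$.
   Context: A set $S \subseteq \mathcal{X}$ is $\alpha$-indistinguishable with respect to a function class $\mathcal{F}$ and $Y$ if $|\mathrm{Cov}(f(X), Y \mid X \in S)| \le \alpha$ for all $f \in \mathcal{F}$. Sets $\{S_k\}$ form an $\alpha$-multicalibrated partition with respect to $\mathcal{F}$ and $Y$ if they partition $\mathcal{X}$ and each $S_k$ is $\alpha$-indistinguishable with respect to $\mathcal{F}$ and $Y$. *)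

(* Defs.v *)
From HB Require Import structures.
From mathcomp Require Import all_boot all_order all_algebra.
From mathcomp Require Import all_classical all_reals all_analysis.
Set Implicit Arguments. Unset Strict Implicit. Unset Printing Implicit Defensive.
Import Order.TTheory GRing.Theory Num.Theory.
Local Open Scope classical_set_scope.
Local Open Scope ring_scope.

Definition is_metric (R : realType) (Xs : Type) (d : Xs -> Xs -> R) : Prop :=
  (forall x y, 0 <= d x y) /\ (forall x y, d x y = 0 <-> x = y) /\
  (forall x y, d x y = d y x) /\ (forall x y z, d x z <= d x y + d y z).

Definition d_open (R : realType) (Xs : Type) (d : Xs -> Xs -> R) (U : set Xs) : Prop :=
  forall x, U x -> exists2 r : R, 0 < r & forall y, d x y < r -> U y.

Definition borel_rv (dT : measure_display) (T : measurableType dT) (R : realType)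
  (Xs : Type) (d : Xs -> Xs -> R) (X : T -> Xs) : Prop :=
  forall A : set Xs, <<s d_open d >> A -> measurable (X @^-1` A).

Definition condE (dT : measure_display) (T : measurableType dT) (R : realType)
  (P : probability T R) (A : set T) (Z : T -> R) : R :=
  fine (\int[P]_(w in A) (Z w)%:E) / fine (P A).

Definition condCov (dT : measure_display) (T : measurableType dT) (R : realType)
  (Xs : Type) (P : probability T R) (X : T -> Xs) (Y : T -> R)
  (f : Xs -> R) (S : set Xs) : R :=
  let A := X @^-1` S in
  condE P A (fun w => f (X w) * Y w) - condE P A (fun w => f (X w)) * condE P A Y.

Definition indistinguishable (dT : measure_display) (T : measurableType dT)
  (R : realType) (Xs : Type) (P : probability T R) (X : T -> Xs) (Y : T -> R)
  (F : set (Xs -> R)) (alpha : R) (S : set Xs) : Prop :=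
  forall f, F f -> `|condCov P X Y f S| <= alpha.

Definition is_partition (Xs : Type) (K : set nat) (S : nat -> set Xs) : Prop :=
  (forall k k', K k -> K k' -> k <> k' -> S k `&` S k' = set0) /\
  (forall x, exists2 k, K k & S k x).

Definition multicalibrated_partition (dT : measure_display) (T : measurableType dT)
  (R : realType) (Xs : Type) (P : probability T R) (X : T -> Xs) (Y : T -> R)
  (F : set (Xs -> R)) (alpha : R) (K : set nat) (S : nat -> set Xs) : Prop :=
  is_partition K S /\ forall k, K k -> indistinguishable P X Y F alpha (S k).

Definition Lip_class (R : realType) (Xs : Type) (L : R) (d : Xs -> Xs -> R)
  : set (Xs -> R) :=
  [set f | (forall x, 0 <= f x <= 1) /\ (forall x x', `|f x - f x'| <= L * d x x')].

(* Main.v *)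
Require Import Defs.
From HB Require Import structures.
From mathcomp Require Import all_boot all_order all_algebra.
From mathcomp Require Import all_classical all_reals all_analysis.
From mathcomp Require Import ring lra measurable_realfun.
Import Order.TTheory GRing.Theory Num.Theory.
Local Open Scope classical_set_scope.
Local Open Scope ring_scope.

Section Helpers.
Context (dT : measure_display) (T : measurableType dT) (R : realType)
  (P : probability T R).

Lemma bint (A : set T) (h : T -> R) (M : R) : measurable A ->
  measurable_fun setT h -> (forall x, A x -> `|h x| <= M) ->
  P.-integrable A (EFin \o h).
Proof.
move=> mA mh hM.
apply: (le_integrable mA _ _ (finite_measure_integrable_cst P M mA)).
- by apply/measurable_EFinP; apply: measurable_funS mh.
  - move=> x Ax /=; rewrite lee_fin.
  by apply: (le_trans (hM x Ax)); apply: ler_norm.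
Qed.


Lemma core (A : set T) (U V : T -> R) (c r : R) : measurable A ->
  measurable_fun setT U -> measurable_fun setT V -> 0 < fine (P A) ->
  (forall w, 0 <= U w <= 1) -> (forall w, 0 <= V w <= 1) -> 0 <= r ->
  (forall w, A w -> `|U w - c| <= r) ->
  `|Rintegral P A (fun w => U w * V w) / fine (P A) -
    Rintegral P A U / fine (P A) * (Rintegral P A V / fine (P A))| <= r / 2.
Proof.
move=> mA mU mV a0 U01 V01 r0 Uc.
set a := fine (P A).
have iU : P.-integrable A (EFin \o U).
  apply: (bint A _ 1) => // w _; have := U01 w; rewrite ler_norml; lra.
have iV : P.-integrable A (EFin \o V).
  apply: (bint A _ 1) => // w _; have := V01 w; rewrite ler_norml; lra.
have i1 : P.-integrable A (EFin \o cst 1) by exact: finite_measure_integrable_cst.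
have iUV : P.-integrable A (EFin \o (fun w => U w * V w)).
  apply: (bint A _ 1) => //; first exact: measurable_funM.
  move=> w _; have := U01 w; have := V01 w; rewrite ler_norml; nra.
set iVv := Rintegral P A V.
set iUv := Rintegral P A U.
set iUVv := Rintegral P A (fun w => U w * V w).
set mu := iVv / a.
have iV0 : 0 <= iVv by apply: Rintegral_ge0 => w _; have := V01 w; lra.
have iVa : iVv <= a.
  have -> : a = Rintegral P A (fun _ => 1) by rewrite Rintegral_cst // mul1r.
  by apply: le_Rintegral => // w _; have := V01 w; lra.
have mu0 : 0 <= mu by apply: divr_ge0 => //; lra.
have mu1 : mu <= 1 by rewrite ler_pdivrMr // mul1r.
have mua : mu * a = iVv by rewrite /mu divfK // gt_eqF.
have ib : forall h : T -> R, measurable_fun setT h ->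
    (forall w, A w -> `|h w| <= 1 + `|c| * 2 + 2) -> P.-integrable A (EFin \o h).
  by move=> h mh hb; apply: (bint A _ (1 + `|c| * 2 + 2)).
have mcst : forall k : R, measurable_fun setT (fun _ : T => k) by move=> k; exact: measurable_cst.
have hc := normr_ge0 c.
have IW : Rintegral P A (fun w => (U w - c) * (V w - mu)) = iUVv - mu * iUv.
  have -> : Rintegral P A (fun w => (U w - c) * (V w - mu)) =
    Rintegral P A (fun w => (U w * V w - mu * U w) - (c * V w - c * mu)).
    by apply: eq_Rintegral => w _; ring.
  rewrite RintegralB //; last 2 first.
  - apply: ib; first by apply: measurable_funB; apply: measurable_funM.
    move=> w _; have := U01 w; have := V01 w; rewrite ler_norml; nra.
  - apply: ib; first by apply: measurable_funB; [apply: measurable_funM|].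
    move=> w _; have : `|V w - mu| <= 1 by rewrite ler_norml; have := V01 w; lra.
    rewrite -mulrBr normrM => h; apply: le_trans (ler_wpM2l hc h) _; lra.
  rewrite RintegralB //; last first.
    apply: ib; first by apply: measurable_funM.
    move=> w _; have := U01 w; have := V01 w; rewrite ler_norml; nra.
  rewrite RintegralB //; last first.
    apply: ib; first by apply: measurable_funM.
    move=> w _; rewrite normrM (ger0_norm mu0).
    have : `|c| * mu <= `|c| * 1 by apply: ler_wpM2l.
    lra.
    apply: ib; first by apply: measurable_funM.
    move=> w _; rewrite normrM; have := V01 w => /andP[v0 v1].
    rewrite (ger0_norm v0); have : `|c| * V w <= `|c| * 1 by apply: ler_wpM2l.
    lra.
  have e1 : Rintegral P A (fun x => mu * U x) = mu * iUv by rewrite RintegralZl.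
  have e2 : Rintegral P A (fun x => c * V x) = c * iVv by rewrite RintegralZl.
  have e3 : Rintegral P A (fun _ => c * mu) = c * mu * a by rewrite Rintegral_cst.
  rewrite e1 e2 e3 /iUVv -mua; ring.
have mW : measurable_fun setT (fun w => (U w - c) * (V w - mu)).
  by apply: measurable_funM; apply: measurable_funB.
have mg : measurable_fun setT (fun w => r * (1 - 2 * mu) * V w + r * mu).
  by apply: measurable_funD => //; apply: measurable_funM.
have gW : forall w, A w -> `|(U w - c) * (V w - mu)| <= r * (1 - 2 * mu) * V w + r * mu.
  move=> w Aw; rewrite normrM; have h1 := Uc w Aw.
  have := V01 w => /andP[v0 v1].
  have h2 : `|V w - mu| <= V w * (1 - mu) + (1 - V w) * mu.
    have p1 : 0 <= V w * (1 - mu) by apply: mulr_ge0; lra.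
    have p2 : 0 <= (1 - V w) * mu by apply: mulr_ge0; lra.
    rewrite ler_norml; apply/andP; split; nra.
  apply: le_trans (ler_pM (normr_ge0 _) (normr_ge0 _) h1 h2) _.
  rewrite le_eqVlt; apply/orP; left; apply/eqP; ring.
have gle : forall w, r * (1 - 2 * mu) * V w + r * mu <= r.
  move=> w; have := V01 w => /andP[v0 v1].
  have p3 : 0 <= V w * mu by apply: mulr_ge0.
  have p4 : 0 <= (1 - V w) * (1 - mu) by apply: mulr_ge0; lra.
  have s1 : (1 - 2 * mu) * V w + mu <= 1 by nra.
  have := ler_wpM2l r0 s1; rewrite mulr1.
  suff -> : r * (1 - 2 * mu) * V w + r * mu = r * ((1 - 2 * mu) * V w + mu) by [].
  ring.
have iW : P.-integrable A (EFin \o (fun w => (U w - c) * (V w - mu))).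
  apply: (bint A _ r) => // w Aw; apply: le_trans (gW w Aw) _; exact: gle.
have iaW : P.-integrable A (EFin \o (fun w => `|(U w - c) * (V w - mu)|)).
  apply: (bint A _ r) => //; first exact: measurableT_comp.
  move=> w Aw; rewrite normr_id; apply: le_trans (gW w Aw) _; exact: gle.
have ig : P.-integrable A (EFin \o (fun w => r * (1 - 2 * mu) * V w + r * mu)).
  apply: (bint A _ r) => // w Aw.
  have := V01 w => /andP[v0 v1].
  have g0 : 0 <= r * (1 - 2 * mu) * V w + r * mu.
    apply: le_trans (gW w Aw); exact: normr_ge0.
  rewrite ger0_norm //; exact: gle.
have Ig : Rintegral P A (fun w => r * (1 - 2 * mu) * V w + r * mu) =
    r * (1 - 2 * mu) * iVv + r * mu * a.
  rewrite RintegralD //; last exact: finite_measure_integrable_cst.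
  rewrite RintegralZl // Rintegral_cst //.
  apply: (bint A _ r) => //; first by apply: measurable_funM.
  move=> w _; have := V01 w => /andP[v0 v1].
  rewrite !normrM (ger0_norm r0) (ger0_norm v0).
  have h : `|1 - 2 * mu| <= 1 by rewrite ler_norml; lra.
  by have := ler_pM (mulr_ge0 r0 (normr_ge0 _)) v0 (ler_wpM2l r0 h) v1; rewrite !mulr1.
have bnd : `|iUVv - mu * iUv| <= r * (1 - 2 * mu) * iVv + r * mu * a.
  rewrite -IW -Ig; apply: le_trans (le_normr_Rintegral _ _) _ => //.
  by apply: le_Rintegral.
have -> : iUVv / a - iUv / a * mu = (iUVv - mu * iUv) / a.
  by field; rewrite gt_eqF.
rewrite normrM [`|a^-1|]gtr0_norm ?invr_gt0 //.
rewrite ler_pdivrMr //; apply: le_trans bnd _.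
rewrite -mua -subr_ge0.
have -> : r / 2 * a - (r * (1 - 2 * mu) * (mu * a) + r * mu * a) =
  2 * (r * a * (mu - 1 / 2) ^+ 2) by field.
apply: mulr_ge0 => //; apply: mulr_ge0; [apply: mulr_ge0 => //; exact: ltW|].
exact: sqr_ge0.
Qed.

End Helpers.

Theorem corollary5 (dT : measure_display) (T : measurableType dT) (R : realType)
  (P : probability T R) (Xs : Type) (d : Xs -> Xs -> R)
  (X : T -> Xs) (Y : T -> R) (L alpha : R) (K : set nat) (S : nat -> set Xs) :
  is_metric d ->
  borel_rv d X ->
  measurable_fun setT Y ->
  (forall w, 0 <= Y w <= 1) ->
  0 < L -> 0 <= alpha ->
  is_partition K S ->
  (forall k, K k -> forall x y, S k x -> S k y -> d x y <= 4 * alpha / L) ->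
  (forall k, K k -> measurable (X @^-1` S k)) ->
  (forall k, K k -> (0 < P (X @^-1` S k))%E) ->
  multicalibrated_partition P X Y (Lip_class L d) alpha K S.
Proof.
move=> [d0 [dxy [dsym dtri]]] hX mY Y01 L0 al0 hpart hdiam mS PS.
split => // k Kk f [f01 fL].
set A := X @^-1` S k.
have mA : measurable A := mS k Kk.
have a0 : 0 < fine (P A).
  apply: fine_gt0; apply/andP; split; first exact: PS.
  exact: le_lt_trans (probability_le1 P mA) (ltry 1).
have mU : measurable_fun setT (fun w => f (X w)).
  apply: (measurability _ (RGenOpens.measurableE R)).
  move=> _ [_ [a [b ->]] <-]; rewrite setTI.
  have -> : (fun w => f (X w)) @^-1` `]a, b[%classic = X @^-1` (f @^-1` `]a, b[%classic) by [].
  apply: hX; apply: sub_sigma_algebra => x /=; rewrite in_itv /= => /andP[ax xb].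
  exists (Order.min (f x - a) (b - f x) / L).
    by apply: divr_gt0 => //; rewrite lt_min; apply/andP; split; lra.
  move=> y; rewrite ltr_pdivlMr // lt_min => /andP[h1 h2].
  have := fL x y; rewrite ler_norml => /andP[h3 h4].
  rewrite in_itv /=; apply/andP; split; lra.
have [w0 Aw0] : exists w, A w.
  apply/not_existsP => hn.
  have A0 : A = set0 by apply/seteqP; split => w // Aw; exact: (hn w).
  by have := PS k Kk; rewrite -/A A0 measure0 ltxx.
set E := [set f x | x in S k].
have hE : has_sup E.
  split; first by exists (f (X w0)), (X w0).
  by exists 1 => _ [x _ <-]; have := f01 x => /andP[].
have Uc : forall w, A w -> `|f (X w) - (sup E - 2 * alpha)| <= 2 * alpha.
  move=> w Aw; have h1 : f (X w) <= sup E by apply: sup_upper_bound => //; exists (X w).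
  have h2 : sup E <= f (X w) + 4 * alpha.
    apply: ge_sup; first by exists (f (X w)), (X w).
    move=> _ [y Sy <-]; have := fL y (X w); rewrite ler_norml => /andP[_ h].
    have := hdiam k Kk y (X w) Sy Aw.
    rewrite ler_pdivlMr // => hd.
    have : L * d y (X w) <= 4 * alpha by rewrite mulrC.
    lra.
  rewrite ler_norml; apply/andP; split; lra.
have := @core _ _ _ P _ _ _ _ _ mA mU mY a0 (fun w => f01 (X w)) Y01 _ Uc.
rewrite /condCov /condE -/A.
have -> : 2 * alpha / 2 = alpha by field.
apply; lra.
Qed.
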